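(* Let $(A,\cdot)$ be an associative algebra over a field $\mathbf{k}$ of characteristic $0$ and $N:A\to A$ a Nijenhuis operator on it. For $n\ge1$ define $\Psi_n:\mathrm{Hom}(A^{\otimes n},A)\to\mathrm{Hom}(A^{\otimes n+1},A)$ by $\Psi_n(f)=(-1)^{n+1}\delta_{\mathrm{Hoch}}f$, where $\delta_{\mathrm{Hoch}}$ is the Hochschild coboundary of $(A,\cdot)$ with adjoint coefficients. Then the maps $\Psi_n$ induce a homomorphism $\Psi:H^n(N)\to H^{n+1}_{\mathrm{Hoch}}(A_N;A_N)$, $[f]\mapsto[\Psi_n(f)]$, from the cohomology of the Nijenhuis operator $N$ to the Hochschild cohomology of the deformed associative algebra $A_N$ with coefficients in itself.
   Context: A Nijenhuis operator: linear $N$ with $N(a)N(b)=N(N(a)b+aN(b)-N(ab))$. The deformed algebra is $A_N=(A,\cdot_N)$ with $a\cdot_Nb=N(a)\cdot b+a\cdot N(b)-N(a\cdot b)$ (associative). $(\delta_{\mathrm{Hoch}}f)(a_1,\dots,a_{n+1})=a_1\cdot f(a_2,\dots,a_{n+1})+\sum_{i=1}^n(-1)^if(a_1,\dots,a_i\cdot a_{i+1},\dots,a_{n+1})+(-1)^{n+1}f(a_1,\dots,a_n)\cdot a_{n+1}$. $H^\bullet_{\mathrm{Hoch}}(A_N;A_N)$ is the Hochschild cohomology of $A_N$ with coefficients in the adjoint bimodule (same formula with $\cdot_N$). $H^\bullet(N)$ is the cohomology of $\{\bigoplus_{n\ge0}\mathrm{Hom}(A^{\otimes n},A),d_N\}$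 where for $n\ge1$: $(d_Nf)(a_1,\dots,a_{n+1})=N(a_1)f(a_2,\dots,a_{n+1})-(-1)^nf(a_1,\dots,a_n)N(a_{n+1})+\sum_{i=1}^n(-1)^if(a_1,\dots,a_{i-1},a_i\cdot_Na_{i+1},\dots,a_{n+1})-N\big((\delta_{\mathrm{Hoch}}f)(a_1,\dots,a_{n+1})\big)$, and for $a\in A$: $d_N(a)(b)=N(b)a-aN(b)-N(ba-ab)$. *)

(* Defs.v *)
From HB Require Import structures.
From mathcomp Require Import all_boot all_order all_algebra.
Set Implicit Arguments. Unset Strict Implicit. Unset Printing Implicit Defensive.
Import GRing.Theory.
Local Open Scope ring_scope.

(* An n-cochain: a map A^n -> A, arguments indexed by 'I_n (position 0 = a_1). *)
Definition cochain (A : Type) (n : nat) := ('I_n -> A) -> A.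

Section Cochains.
Variables (R : fieldType) (A : lmodType R).

Definition upd n (a : 'I_n -> A) (i : 'I_n) (x : A) : 'I_n -> A :=
  fun j => if j == i then x else a j.

Definition multilinear n (f : cochain A n) : Prop :=
  forall (a : 'I_n -> A) (i : 'I_n) (c : R) (x y : A),
    f (upd a i (c *: x + y)) = c *: f (upd a i x) + f (upd a i y).

Definition ctail n (a : 'I_n.+1 -> A) : 'I_n -> A := fun j => a (lift ord0 j).
Definition cinit n (a : 'I_n.+1 -> A) : 'I_n -> A := fun j => a (widen_ord (leqnSn n) j).
(* (a_1,...,a_{n+1}) |-> (a_1,...,a_i a_{i+1},...,a_{n+1}), with i 0-based *)
Definition contract (mul : A -> A -> A) n (a : 'I_n.+1 -> A) (i : nat) : 'I_n -> A :=
  fun j => if (j < i)%N then a (inord j)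
           else if j == i :> nat then mul (a (inord i)) (a (inord i.+1))
           else a (inord j.+1).

Definition hoch (mul : A -> A -> A) n (f : cochain A n) : cochain A n.+1 :=
  fun a => mul (a ord0) (f (ctail a))
         + \sum_(i < n) ((-1 : R) ^+ i.+1) *: f (contract mul a i)
         + ((-1 : R) ^+ n.+1) *: mul (f (cinit a)) (a ord_max).

Definition mulN (mul : A -> A -> A) (N : A -> A) (a b : A) : A :=
  mul (N a) b + mul a (N b) - N (mul a b).

Definition dN (mul : A -> A -> A) (N : A -> A) n (f : cochain A n) : cochain A n.+1 :=
  fun a => mul (N (a ord0)) (f (ctail a))
         - ((-1 : R) ^+ n) *: mul (f (cinit a)) (N (a ord_max))
         + \sum_(i < n) ((-1 : R) ^+ i.+1) *: f (contract (mulN mul N) a i)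
         - N (hoch mul f a).

Definition dN0 (mul : A -> A -> A) (N : A -> A) (x : A) : cochain A 1 :=
  fun b => mul (N (b ord0)) x - mul x (N (b ord0)) - N (mul (b ord0) x - mul x (b ord0)).

Definition Psi (mul : A -> A -> A) n (f : cochain A n) : cochain A n.+1 :=
  fun a => ((-1 : R) ^+ n.+1) *: hoch mul f a.

Definition isNcobound (mul : A -> A -> A) (N : A -> A) (n : nat) : cochain A n.+1 -> Prop :=
  match n return cochain A n.+1 -> Prop with
  | 0 => fun f => exists x : A, forall b, f b = dN0 mul N x b
  | m.+1 => fun f => exists g : cochain A m.+1,
              multilinear g /\ forall b, f b = dN mul N g b
  end.

End Cochains.

(* Main.v *)
Require Import Defs.
From HB Require Import structures.
From mathcomp Require Import all_boot all_order all_algebra.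
From mathcomp Require Import zify.
From Stdlib Require Import FunctionalExtensionality.
Set Implicit Arguments. Unset Strict Implicit. Unset Printing Implicit Defensive.
Import GRing.Theory.
Local Open Scope ring_scope.

Lemma inordE' q x : ((inord x : 'I_q.+1) : nat) = if (x < q.+1)%N then x else 0%N.
Proof. rewrite /inord /insubd /odflt /oapp; case: insubP => [u -> /= ->|/negbTE -> //]; by []. Qed.

Definition updn (A : Type) n (a : 'I_n -> A) (k : nat) (w : A) : 'I_n -> A :=
  fun j => if (j : nat) == k then w else a j.
Definition merge3 (A : Type) p (w : A) (a : 'I_p.+2 -> A) (k : nat) : 'I_p -> A :=
  fun j => if (j < k)%N then a (inord j) else if (j : nat) == k then w else a (inord j.+2).

Ltac split1 := match goal with |- context [if ?c then _ else _] =>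
  lazymatch c with context [if _ then _ else _] => fail | _ =>
   let H := fresh "H" in case: (boolP c) => H; [rewrite ?H /= | rewrite ?(negbTE H) /=] end end.
Ltac eqs := repeat match goal with
  | H : is_true (_ == _) |- _ => move/eqP: H => H
  | H : is_true (~~ (_ == _)) |- _ => move/eqP: H => H end.
Ltac splits := repeat split1; eqs.
Ltac leaf := first [lia | apply: val_inj]; rewrite /= ?inordE' /bump /= ?add1n; splits; lia.
Ltac crush j := have := ltn_ord j; rewrite /upd /updn /merge3 /ctail /cinit /contract /= ?inordE' /bump /= ?add1n => ?;
   splits; try (exfalso; lia); repeat f_equal; try done; leaf.

Ltac crush0 := rewrite /upd /updn /merge3 /ctail /cinit /contract /= ?inordE' /bump /= ?add1n;
   splits; try (exfalso; lia); repeat f_equal; try done; leaf.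

Ltac mv x := rewrite ?(addrAC _ x).
Ltac canc x := rewrite ?(addrAC _ x) ?(addrAC _ (- x)) addrK.
Lemma padE (V : zmodType) (x y : V) : 0 + x = 0 + y -> x = y.
Proof. by rewrite !add0r. Qed.
Ltac acs := repeat match goal with |- _ = _ + ?y => mv y; f_equal end.
Ltac cancel_all := repeat match goal with |- context [ (_ + (- ?x))%R ] => progress (try canc x) end.
Ltac solve_ac := rewrite ?opprD ?opprK ?addrA; cancel_all; apply: padE; rewrite ?addrA; acs.

Section S.
Variables (R : fieldType) (A : lmodType R).
Implicit Types m : A -> A -> A.
Ltac fe j := apply: functional_extensionality => j.

Lemma K1 p m (a : 'I_p.+2 -> A) k :
  ctail (contract m a k.+1) = contract m (ctail a) k.
Proof. fe j; crush j. Qed.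
Lemma K2 p m (a : 'I_p.+2 -> A) k : contract m a k.+1 ord0 = a ord0.
Proof. crush0. Qed.
Lemma K3a p m (a : 'I_p.+2 -> A) : ctail (contract m a 0) = ctail (ctail a).
Proof. fe j; crush j. Qed.
Lemma K3b p m (a : 'I_p.+2 -> A) : contract m a 0 ord0 = m (a ord0) (ctail a ord0).
Proof. crush0. Qed.
Lemma K4 p m (a : 'I_p.+2 -> A) k : (k < p)%N -> cinit (contract m a k) = contract m (cinit a) k.
Proof. move=> kp; fe j; crush j. Qed.
Lemma K5 p m (a : 'I_p.+2 -> A) k : (k < p)%N -> contract m a k ord_max = a ord_max.
Proof. move=> kp; crush0. Qed.
Lemma K6a p m (a : 'I_p.+2 -> A) : cinit (contract m a p) = cinit (cinit a).
Proof. fe j; crush j. Qed.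
Lemma K6b p m (a : 'I_p.+2 -> A) : contract m a p ord_max = m (cinit a ord_max) (a ord_max).
Proof. crush0. Qed.
Lemma K7a p (a : 'I_p.+2 -> A) : ctail (cinit a) = cinit (ctail a).
Proof. fe j; crush j. Qed.
Lemma K7b p (a : 'I_p.+2 -> A) : cinit a ord0 = a ord0.
Proof. crush0. Qed.
Lemma K7c p (a : 'I_p.+2 -> A) : ctail a ord_max = a ord_max.
Proof. crush0. Qed.
Lemma K8 p m m' (a : 'I_p.+2 -> A) k l : (k.+1 < l)%N ->
  contract m' (contract m a l) k = contract m (contract m' a k) l.-1.
Proof. move=> kl; fe j; crush j. Qed.
Lemma K9a p m m' (a : 'I_p.+2 -> A) k : (k < p)%N ->
  contract m' (contract m a k.+1) k = merge3 (m' (a (inord k)) (m (a (inord k.+1)) (a (inord k.+2)))) a k.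
Proof. move=> kp; fe j; crush j. Qed.
Lemma K9b p m m' (a : 'I_p.+2 -> A) k : (k < p)%N ->
  contract m' (contract m a k) k = merge3 (m' (m (a (inord k)) (a (inord k.+1))) (a (inord k.+2))) a k.
Proof. move=> kp; fe j; crush j. Qed.
Lemma merge3_upd p (w : A) (a : 'I_p.+2 -> A) k : merge3 w a k = updn (merge3 0 a k) k w.
Proof. fe j; crush j. Qed.

Definition face m n (k : nat) (f : cochain A n) : cochain A n.+1 := fun a =>
  if k == 0%N then m (a ord0) (f (ctail a))
  else if (k <= n)%N then f (contract m a k.-1) else m (f (cinit a)) (a ord_max).

Lemma face0 m n (f : cochain A n) a : face m 0 f a = m (a ord0) (f (ctail a)).
Proof. by []. Qed.
Lemma faceM m n (f : cochain A n) a k : (k < n)%N -> face m k.+1 f a = f (contract m a k).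
Proof. by move=> kn; rewrite /face /= kn. Qed.
Lemma faceL m n (f : cochain A n) a : face m n.+1 f a = m (f (cinit a)) (a ord_max).
Proof. by rewrite /face /= ltnn. Qed.

Lemma hoch_face m n (f : cochain A n) a :
  hoch m f a = \sum_(k < n.+2) (-1)^+k *: face m k f a.
Proof.
rewrite big_ord_recl big_ord_recr /= expr0 scale1r face0 faceL /hoch.
rewrite -!addrA; congr (_ + (_ + _)).
by apply: eq_bigr => i _; rewrite /= /bump /= add1n faceM.
Qed.

Definition bil m := (forall c x y z, m (c *: x + y) z = c *: m x z + m y z) /\
                    (forall c x y z, m z (c *: x + y) = c *: m z x + m z y).

Lemma bil_r0 m z : bil m -> m z 0 = 0.
Proof. case=> _ h; have := h 1 0 0 z; rewrite !scale1r addr0 => e.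
by move/(congr1 (fun t => t - m z 0)): e; rewrite addrK subrr. Qed.
Lemma bil_l0 m z : bil m -> m 0 z = 0.
Proof. case=> h _; have := h 1 0 0 z; rewrite !scale1r addr0 => e.
by move/(congr1 (fun t => t - m 0 z)): e; rewrite addrK subrr. Qed.
Lemma bil_rsum m z K (c : 'I_K -> R) (y : 'I_K -> A) : bil m ->
  m z (\sum_(i < K) c i *: y i) = \sum_(i < K) c i *: m z (y i).
Proof.
move=> hm; apply: (big_rec2 (fun u v => m z u = v)); first exact: bil_r0.
by move=> i u v _ <-; case: hm => _ ->.
Qed.
Lemma bil_lsum m z K (c : 'I_K -> R) (y : 'I_K -> A) : bil m ->
  m (\sum_(i < K) c i *: y i) z = \sum_(i < K) c i *: m (y i) z.
Proof.
move=> hm; apply: (big_rec2 (fun u v => m u z = v)); first exact: bil_l0.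
by move=> i u v _ <-; case: hm => -> _.
Qed.

Lemma face_lin m n j (G : cochain A n) K (H : 'I_K -> cochain A n) (c : 'I_K -> R) a :
  bil m -> (forall b, G b = \sum_(i < K) c i *: H i b) ->
  face m j G a = \sum_(i < K) c i *: face m j (H i) a.
Proof.
move=> hm hG; rewrite /face; case: ifP => _; first by rewrite hG bil_rsum.
by case: ifP => _; rewrite hG // bil_lsum.
Qed.

Lemma hoch2 m m' n (g : cochain A n) a : bil m ->
  hoch m (hoch m' g) a = \sum_(j < n.+3) \sum_(i < n.+2)
      (-1)^+(i + j) *: face m j (face m' i g) a.
Proof.
move=> hm; rewrite hoch_face; apply: eq_bigr => j _.
rewrite (@face_lin m n.+1 j _ n.+2 (fun i => face m' i g) (fun i => (-1)^+i)) //; last first.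
  by move=> b; rewrite hoch_face.
rewrite scaler_sumr; apply: eq_bigr => i _; by rewrite scalerA -exprD addnC.
Qed.

Lemma sum_cancel (Z : nat -> nat -> A) N :
  (forall i j, (i < j)%N -> (j <= N)%N -> Z j i = Z i j.-1) ->
  \sum_(j < N.+1) \sum_(i < N) (-1)^+(i + j) *: Z j i = 0.
Proof.
elim: N => [|N IH] hZ; first by rewrite big1 // => j _; rewrite big_ord0.
set F := fun (j i : nat) => (-1)^+(i + j) *: Z j i.
have E1 : \sum_(j < N.+2) \sum_(i < N.+1) F j i =
   \sum_(j < N.+2) \sum_(i < N) F j i + \sum_(j < N.+2) F j N.
  by rewrite -big_split; apply: eq_bigr => j _; rewrite big_ord_recr.
have E2 : \sum_(j < N.+2) \sum_(i < N) F j i =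
   \sum_(j < N.+1) \sum_(i < N) F j i + \sum_(i < N) F N.+1 i.
  by rewrite big_ord_recr.
have E3 : \sum_(j < N.+2) F j N = \sum_(j < N) F j N + F N N + F N.+1 N.
  by rewrite big_ord_recr big_ord_recr.
have E4 : \sum_(i < N) F N.+1 i = - \sum_(i < N) F i N.
  rewrite -sumrN; apply: eq_bigr => i _; rewrite /F (hZ i N.+1) //=; last exact: leqW (ltn_ord i).
  by rewrite addnS exprS mulN1r scaleNr addnC.
have E5 : F N.+1 N = - F N N.
  by rewrite /F (hZ N N.+1) //= addnS exprS mulN1r scaleNr.
change (\sum_(j < N.+2) \sum_(i < N.+1) F j i = 0).
rewrite E1 E2 IH; last by move=> i j ij jN; apply: hZ => //; lia.
rewrite E3 E4 E5 add0r.
by rewrite addrK addNr.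
Qed.

Definition compat m m' := forall x y z,
  m (m' x y) z + m' (m x y) z = m x (m' y z) + m' x (m y z).
Definition additive_c n (g : cochain A n) := forall b k x y, (k < n)%N ->
  g (updn b k (x + y)) = g (updn b k x) + g (updn b k y).

Section Z.
Variables (m m' : A -> A -> A) (n : nat) (g : cochain A n) (a : 'I_n.+2 -> A).

Lemma ns1 l : (l < n)%N -> face m l.+2 (face m' 0 g) a = face m' 0 (face m l.+1 g) a.
Proof. by move=> ln; rewrite faceM // face0 K2 K1 face0 faceM. Qed.
Lemma ns2 k l : (k < l)%N -> (l < n)%N ->
  face m l.+2 (face m' k.+1 g) a = face m' k.+1 (face m l.+1 g) a.
Proof.
move=> kl ln; have kn : (k < n)%N by lia.
have ln' : (l.+1 < n.+1)%N by lia.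
have kn1 : (k < n.+1)%N by lia. rewrite !faceM //. have H := @K8 n m m' a k l.+1 ltac:(lia). by rewrite H.
Qed.
Lemma ns3 k : (k < n)%N -> face m n.+2 (face m' k.+1 g) a = face m' k.+1 (face m n.+1 g) a.
Proof.
move=> kn; rewrite (@faceL m n.+1) (@faceM m' n) // (@faceM m' n.+1); last by lia.
by rewrite (@faceL m n) K4 // K5.
Qed.

Hypothesis hc : compat m m'.
Lemma sp1 : face m 1 (face m' 0 g) a + face m' 1 (face m 0 g) a =
            face m 0 (face m' 0 g) a + face m' 0 (face m 0 g) a.
Proof.
rewrite (@faceM m n.+1) // (@faceM m' n.+1) // !face0 !K3a !K3b.
by rewrite addrC hc.
Qed.
Lemma sp2 : face m n.+2 (face m' 0 g) a + face m' n.+2 (face m 0 g) a =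
            face m 0 (face m' n.+1 g) a + face m' 0 (face m n.+1 g) a.
Proof.
rewrite (@faceL m n.+1) (@faceL m' n.+1) !face0 (@faceL m' n) (@faceL m n).
by rewrite !K7a !K7b !K7c hc.
Qed.
Lemma sp4 : face m n.+2 (face m' n.+1 g) a + face m' n.+2 (face m n.+1 g) a =
            face m n.+1 (face m' n.+1 g) a + face m' n.+1 (face m n.+1 g) a.
Proof.
rewrite (@faceL m n.+1) (@faceL m' n.+1) (@faceL m' n) (@faceL m n).
rewrite (@faceM m n.+1) // (@faceM m' n.+1) // (@faceL m' n) (@faceL m n).
by rewrite !K6a !K6b hc addrC.
Qed.
Lemma g_merge3 k x y : additive_c g -> (k < n)%N ->
  g (merge3 (x + y) a k) = g (merge3 x a k) + g (merge3 y a k).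
Proof.
by move=> hg kn; rewrite (merge3_upd (x + y)) (merge3_upd x) (merge3_upd y) hg.
Qed.
Lemma sp3 k : additive_c g -> (k < n)%N ->
  face m k.+2 (face m' k.+1 g) a + face m' k.+2 (face m k.+1 g) a =
  face m k.+1 (face m' k.+1 g) a + face m' k.+1 (face m k.+1 g) a.
Proof.
move=> hg kn; have kn1 : (k < n.+1)%N by lia.
rewrite (@faceM m n.+1) // (@faceM m' n.+1) // (@faceM m n.+1) // (@faceM m' n.+1) //.
rewrite !(@faceM _ n) // K9a // K9a // K9b // K9b //.
by rewrite -!g_merge3 // addrC -hc addrC.
Qed.
End Z.

Lemma Zid m m' n (g : cochain A n) a : compat m m' -> additive_c g ->
  forall i j, (i < j)%N -> (j <= n.+2)%N ->
  face m j (face m' i g) a + face m' j (face m i g) a =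
  face m i (face m' j.-1 g) a + face m' i (face m j.-1 g) a.
Proof.
move=> hc hg i j ij jn.
have hc' : compat m' m by move=> x y z; rewrite addrC hc addrC.
case: i ij => [|k] ij.
  case: j ij jn => [//|[|l]] ij jn; first exact: sp1.
  case: (ltnP l n) => hl.
    by rewrite ns1 // ns1 // addrC.
  have -> : l = n by lia.
  exact: sp2.
case: (ltnP k n) => hk.
  have [l jl] : exists l, j = l.+2 by exists j.-2; lia.
  subst j.
  case: (ltngtP k l) => hkl; last by rewrite -hkl sp3.
    2: lia.
  case: (ltnP l n) => hl.
    by rewrite ns2 // ns2 // addrC.
  have -> : l = n by lia.
  by rewrite ns3 // ns3 // addrC.
have -> : k = n by lia.
have -> : j = n.+2 by lia.
exact: sp4.
Qed.

Lemma I2 m m' n (g : cochain A n) a : bil m -> bil m' -> compat m m' -> additive_c g ->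
  hoch m (hoch m' g) a + hoch m' (hoch m g) a = 0.
Proof.
move=> hm hm' hc hg; rewrite hoch2 // hoch2 // -big_split /=.
rewrite (eq_bigr (fun j : 'I_n.+3 => \sum_(i < n.+2) (-1)^+(i + j) *:
   (face m j (face m' i g) a + face m' j (face m i g) a))); last first.
  by move=> j _; rewrite -big_split; apply: eq_bigr => i _; rewrite scalerDr.
apply: (sum_cancel (Z := fun j i => face m j (face m' i g) a + face m' j (face m i g) a)).
by move=> i j ij jn; apply: Zid.
Qed.

Definition mlin n (g : cochain A n) := forall b k c x y, (k < n)%N ->
  g (updn b k (c *: x + y)) = c *: g (updn b k x) + g (updn b k y).

Lemma upd_updn n (b : 'I_n -> A) (i : 'I_n) w : upd b i w = updn b i w.
Proof. by []. Qed.

Lemma mlinP n (g : cochain A n) : multilinear g <-> mlin g.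
Proof.
split=> h.
  move=> b k c x y kn; have -> : k = Ordinal kn by [].
  by rewrite -!upd_updn h.
by move=> b i c x y; rewrite !upd_updn h.
Qed.

Lemma mlin_add n (g : cochain A n) : mlin g -> additive_c g.
Proof. by move=> h b k x y kn; rewrite -{1}(scale1r x) h // scale1r. Qed.

Lemma U1 p (b : 'I_p.+1 -> A) w : ctail (updn b 0 w) = ctail b.
Proof. fe j; crush j. Qed.
Lemma U2 p (b : 'I_p.+1 -> A) i w : ctail (updn b i.+1 w) = updn (ctail b) i w.
Proof. fe j; crush j. Qed.
Lemma U3a p (b : 'I_p.+1 -> A) i w : updn b i.+1 w ord0 = b ord0.
Proof. by []. Qed.
Lemma U3b p (b : 'I_p.+1 -> A) w : updn b 0 w ord0 = w.
Proof. by []. Qed.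
Lemma U4 p m (b : 'I_p.+1 -> A) i k w : (i < k)%N ->
  contract m (updn b i w) k = updn (contract m b k) i w.
Proof. move=> ik; fe j; crush j. Qed.
Lemma U5 p m (b : 'I_p.+1 -> A) k w : (k < p)%N ->
  contract m (updn b k w) k = updn (contract m b k) k (m w (b (inord k.+1))).
Proof. move=> kp; fe j; crush j. Qed.
Lemma U6 p m (b : 'I_p.+1 -> A) k w : (k < p)%N ->
  contract m (updn b k.+1 w) k = updn (contract m b k) k (m (b (inord k)) w).
Proof. move=> kp; fe j; crush j. Qed.
Lemma U7 p m (b : 'I_p.+1 -> A) i k w : (k.+1 < i)%N ->
  contract m (updn b i w) k = updn (contract m b k) i.-1 w.
Proof. move=> ki; fe j; crush j. Qed.
Lemma U8a p (b : 'I_p.+1 -> A) i w : (i < p)%N -> cinit (updn b i w) = updn (cinit b) i w.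
Proof. move=> ip; fe j; crush j. Qed.
Lemma U8b p (b : 'I_p.+1 -> A) i w : (i < p)%N -> updn b i w ord_max = b ord_max.
Proof. by move=> ip; rewrite /updn /= gtn_eqF. Qed.
Lemma U9a p (b : 'I_p.+1 -> A) w : cinit (updn b p w) = cinit b.
Proof. fe j; crush j. Qed.
Lemma U9b p (b : 'I_p.+1 -> A) w : updn b p w ord_max = w.
Proof. by rewrite /updn /= eqxx. Qed.

Lemma face_ml m n k (g : cochain A n) : bil m -> mlin g -> mlin (face m k g).
Proof.
move=> [hl hr] hg b i c x y hi; rewrite /face.
case: ifP => [_|k0].
  case: i hi => [|i] hi; first by rewrite !U3b !U1 hl.
  by rewrite !U3a !U2 hg // hr.
have kn' : (k.-1 < n)%N -> True by [].
case: ifP => kn.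
  have kn1 : (k.-1 < n)%N by move/negbT: k0; lia.
  have [ik|ki|->] := ltngtP i k.-1.
  - by rewrite !U4 // hg //; lia.
  - case: (eqVneq i k.-1.+1) => [->|ne].
      by rewrite !U6 // hr hg.
    by rewrite !U7 ?hg //; lia.
  - by rewrite !U5 // hl hg.
case: (ltnP i n) => hin.
  by rewrite !U8a // !U8b // hg // hl.
have -> : i = n by lia.
by rewrite !U9a !U9b hr.
Qed.

Lemma hoch_ml m n (g : cochain A n) : bil m -> mlin g -> mlin (hoch m g).
Proof.
move=> hm hg b i c x y hi; rewrite !hoch_face scaler_sumr -big_split.
apply: eq_bigr => k _; rewrite face_ml // scalerDr !scalerA mulrC //.
Qed.

Lemma hoch_ext m n (G H : cochain A n) a : (forall b, G b = H b) -> hoch m G a = hoch m H a.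
Proof. by move=> h; have -> : G = H by fe b; apply: h. Qed.

Lemma bil_r2 m z c1 c2 u v : bil m -> m z (c1 *: u + c2 *: v) = c1 *: m z u + c2 *: m z v.
Proof.
move=> hm; have hr := hm.2; rewrite hr; congr (_ + _).
by have := hr c2 v 0 z; rewrite !addr0 bil_r0 // addr0.
Qed.
Lemma bil_l2 m z c1 c2 u v : bil m -> m (c1 *: u + c2 *: v) z = c1 *: m u z + c2 *: m v z.
Proof.
move=> hm; have hl := hm.1; rewrite hl; congr (_ + _).
by have := hl c2 v 0 z; rewrite !addr0 bil_l0 // addr0.
Qed.

Lemma face_lin2 m n k (G H1 H2 : cochain A n) c1 c2 a : bil m ->
  (forall b, G b = c1 *: H1 b + c2 *: H2 b) ->
  face m k G a = c1 *: face m k H1 a + c2 *: face m k H2 a.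
Proof.
move=> hm hG; rewrite /face; case: ifP => _; first by rewrite hG bil_r2.
by case: ifP => _; rewrite hG // bil_l2.
Qed.

Lemma hoch_lin2 m n (G H1 H2 : cochain A n) c1 c2 a : bil m ->
  (forall b, G b = c1 *: H1 b + c2 *: H2 b) ->
  hoch m G a = c1 *: hoch m H1 a + c2 *: hoch m H2 a.
Proof.
move=> hm hG; rewrite !hoch_face !scaler_sumr -big_split; apply: eq_bigr => k _.
by rewrite (face_lin2 k a hm hG) scalerDr !scalerA mulrC [_ * c2]mulrC.
Qed.

Section Nij.
Variables (mul : A -> A -> A) (N : A -> A).
Hypotheses (mul_linl : forall (c : R) (x y z : A), mul (c *: x + y) z = c *: mul x z + mul y z)
  (mul_linr : forall (c : R) (x y z : A), mul z (c *: x + y) = c *: mul z x + mul z y)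
  (mulA : forall x y z : A, mul x (mul y z) = mul (mul x y) z)
  (N_lin : forall (c : R) (x y : A), N (c *: x + y) = c *: N x + N y).

Lemma hbil : bil mul. Proof. by split. Qed.
Lemma mulDl x y z : mul (x + y) z = mul x z + mul y z.
Proof. by rewrite -{1}(scale1r x) mul_linl scale1r. Qed.
Lemma mulDr x y z : mul z (x + y) = mul z x + mul z y.
Proof. by rewrite -{1}(scale1r x) mul_linr scale1r. Qed.
Lemma mulNl x z : mul (- x) z = - mul x z.
Proof. by have := mul_linl (-1) x 0 z; rewrite addr0 bil_l0 ?addr0 ?scaleN1r //; exact: hbil. Qed.
Lemma mulNr x z : mul z (- x) = - mul z x.
Proof. by have := mul_linr (-1) x 0 z; rewrite addr0 bil_r0 ?addr0 ?scaleN1r //; exact: hbil. Qed.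
Lemma mulBl x y z : mul (x - y) z = mul x z - mul y z.
Proof. by rewrite mulDl mulNl. Qed.
Lemma mulBr x y z : mul z (x - y) = mul z x - mul z y.
Proof. by rewrite mulDr mulNr. Qed.
Lemma N_D x y : N (x + y) = N x + N y.
Proof. by rewrite -{1}(scale1r x) N_lin scale1r. Qed.
Lemma N_0 : N 0 = 0.
Proof. have := N_D 0 0; rewrite addr0 => e.
by move/(congr1 (fun t => t - N 0)): e; rewrite addrK subrr. Qed.
Lemma N_N x : N (- x) = - N x.
Proof. by have := N_lin (-1) x 0; rewrite addr0 N_0 addr0 !scaleN1r. Qed.
Lemma N_B x y : N (x - y) = N x - N y.
Proof. by rewrite N_D N_N. Qed.
Lemma N_Z c x : N (c *: x) = c *: N x.
Proof. by have := N_lin c x 0; rewrite addr0 N_0 addr0. Qed.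

Local Notation nu := (mulN mul N).

Lemma bilN : bil nu.
Proof.
split=> c x y z; rewrite /mulN.
  rewrite N_lin !mul_linl N_lin scalerBr scalerDr; solve_ac.
rewrite N_lin !mul_linr N_lin scalerBr scalerDr; solve_ac.
Qed.

Lemma compatN : compat mul nu.
Proof.
move=> x y z; rewrite /mulN !mulBl !mulDl !mulBr !mulDr !mulA.
solve_ac.
Qed.

Lemma N_sum K (c : 'I_K -> R) (y : 'I_K -> A) :
  N (\sum_(i < K) c i *: y i) = \sum_(i < K) c i *: N (y i).
Proof.
apply: (big_rec2 (fun u v => N u = v)); first exact: N_0.
by move=> i u v _ <-; rewrite N_lin.
Qed.

Lemma dN_rel n (g : cochain A n) b :
  dN mul N g b = hoch nu g b - hoch mul (fun c => N (g c)) b.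
Proof.
have ht : (-1 : R)^+n.+1 = - (-1)^+n by rewrite exprS mulN1r.
rewrite /dN /hoch /= N_D N_D N_sum N_Z ht !scaleNr /mulN scalerBr scalerDr.
solve_ac.
Qed.

Lemma dN0_rel x b :
  dN0 mul N x b = hoch nu (fun _ : 'I_0 -> A => x) b - hoch mul (fun _ : 'I_0 -> A => N x) b.
Proof.
rewrite /dN0 /hoch /=.
have -> : (ord_max : 'I_1) = ord0 by apply: val_inj.
rewrite !big_ord0 !addr0 expr1 !scaleN1r /mulN N_B.
solve_ac.
Qed.

Lemma compat_sym m m' : compat m m' -> compat m' m.
Proof. by move=> hc x y z; rewrite addrC hc addrC. Qed.

Lemma hoch_scale m n (G H : cochain A n) c a : bil m ->
  (forall b, G b = c *: H b) -> hoch m G a = c *: hoch m H a.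
Proof.
move=> hm hG; rewrite (@hoch_lin2 m n G H H c 0 a hm) ?scale0r ?addr0 //.
by move=> b; rewrite hG scale0r addr0.
Qed.

Lemma hoch_sub m n (G H1 H2 : cochain A n) a : bil m ->
  (forall b, G b = H1 b - H2 b) -> hoch m G a = hoch m H1 a - hoch m H2 a.
Proof.
move=> hm hG; rewrite (@hoch_lin2 m n G H1 H2 1 (-1) a hm) ?scale1r ?scaleN1r //.
by move=> b; rewrite hG scale1r scaleN1r.
Qed.

Lemma mlin_scale n (F : cochain A n) c0 : mlin F -> mlin (fun b => c0 *: F b).
Proof. by move=> hF b k c x y hk; rewrite hF // scalerDr !scalerA mulrC. Qed.

Hypothesis charR0 : [pchar R] =i pred0.

Lemma I1 n (h : cochain A n) a : additive_c h -> hoch mul (hoch mul h) a = 0.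
Proof.
move=> hh; have hc : compat mul mul by move=> x y z; rewrite mulA.
have := I2 a hbil hbil hc hh.
rewrite -mulr2n -scaler_nat => /eqP; rewrite scaler_eq0.
case/orP => [h2|/eqP //]; exfalso; move: h2.
by rewrite ((pcharf0P R).1 charR0 2).
Qed.

Lemma Nf_add n (f : cochain A n) : mlin f -> additive_c (fun c => N (f c)).
Proof. by move=> hf b k x y hk; rewrite /= mlin_add // N_D. Qed.

Lemma cob n (G : cochain A n) (f : cochain A n.+1) : mlin G ->
  (forall b, f b = hoch nu G b - hoch mul (fun c => N (G c)) b) ->
  exists h : cochain A n.+1, multilinear h /\ forall a, Psi mul f a = hoch nu h a.
Proof.
move=> hG hf.
exists (fun b => (- (-1)^+n.+2) *: hoch mul G b); split.
  by apply/mlinP; apply: mlin_scale; apply: hoch_ml => //; exact: hbil.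
move=> a; rewrite (@hoch_scale nu n.+1 _ (hoch mul G) (- (-1)^+n.+2) a bilN) //.
rewrite /Psi (@hoch_sub mul n.+1 f (hoch nu G) (hoch mul (fun c => N (G c))) a hbil) //.
rewrite I1; last exact: Nf_add hG.
rewrite subr0.
have := I2 a bilN hbil (compat_sym compatN) (mlin_add hG).
move/eqP; rewrite addr_eq0 => /eqP ->.
by rewrite scalerN scaleNr opprK.
Qed.

Lemma cocyc n (f : cochain A n) : mlin f -> (forall a, dN mul N f a = 0) ->
  forall a, hoch nu (Psi mul f) a = 0.
Proof.
move=> hf hd a.
rewrite /Psi (@hoch_scale nu n.+1 _ (hoch mul f) ((-1)^+n.+1) a bilN) //.
have := I2 a bilN hbil (compat_sym compatN) (mlin_add hf).
move/eqP; rewrite addr_eq0 => /eqP ->.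
rewrite (@hoch_ext mul n.+1 (hoch nu f) (hoch mul (fun c => N (f c)))); last first.
  by move=> b; apply/eqP; rewrite -subr_eq0 -dN_rel hd.
rewrite I1; last exact: Nf_add hf.
by rewrite oppr0 scaler0.
Qed.
End Nij.
End S.

Unset Implicit Arguments.

Theorem theorem2p17 (R : fieldType) (A : lmodType R) (mul : A -> A -> A) (N : A -> A)
  (charR0 : [pchar R] =i pred0)
  (mul_linl : forall (c : R) (x y z : A), mul (c *: x + y) z = c *: mul x z + mul y z)
  (mul_linr : forall (c : R) (x y z : A), mul z (c *: x + y) = c *: mul z x + mul z y)
  (mulA : forall x y z : A, mul x (mul y z) = mul (mul x y) z)
  (N_lin : forall (c : R) (x y : A), N (c *: x + y) = c *: N x + N y)
  (N_nij : forall x y : A, mul (N x) (N y) = N (mul (N x) y + mul x (N y) - N (mul x y)))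
  (n : nat) :
  (forall f : cochain A n.+1, multilinear f ->
     (forall a, dN mul N f a = 0) ->
     forall a, hoch (mulN mul N) (Psi mul f) a = 0) /\
  (forall f : cochain A n.+1, isNcobound mul N f ->
     exists h : cochain A n.+1, multilinear h /\
       forall a, Psi mul f a = hoch (mulN mul N) h a).
Proof.
split.
  move=> f hf hd a.
  exact: (cocyc mul_linl mul_linr mulA N_lin charR0 (proj1 (mlinP f) hf) hd).
case: n => [|p] f.
  case=> x hx.
  have hG : mlin (fun _ : 'I_0 -> A => x) by move=> b k c y z; rewrite ltn0.
  apply: (cob mul_linl mul_linr mulA N_lin charR0 hG).
  by move=> b; rewrite hx (dN0_rel mul N_lin).
case=> g [hg hx].
apply: (cob mul_linl mul_linr mulA N_lin charR0 (proj1 (mlinP g) hg)).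
by move=> b; rewrite hx (dN_rel mul N_lin).
Qed.
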